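(* Let $n\ge2$ and let $f(u)=\sum_{l=0}^\infty a_l(u-u_0)^l$ be a power series in the polar $n$-complex variable $u$, with polar $n$-complex coefficients $a_l$ and center $u_0$, converging absolutely on an open set $U\subseteq\mathbb{R}^n$ (identifying $u$ with $(x_0,\dots,x_{n-1})$). Write $f(u)=\sum_{k=0}^{n-1}h_kP_k(x_0,\dots,x_{n-1})$ with real functions $P_k$. Then on $U$, for every $k\in\{0,\dots,n-1\}$, $$\frac{\partial P_k}{\partial x_0}=\frac{\partial P_{k+1}}{\partial x_1}=\cdots=\frac{\partial P_{n-1}}{\partial x_{n-k-1}}=\frac{\partial P_0}{\partial x_{n-k}}=\cdots=\frac{\partial P_{k-1}}{\partial x_{n-1}},$$ i.e. $\partial P_{(k+j)\bmod n}/\partial x_j$ does not depend on $j\in\{0,\dots,n-1\}$.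
   Context: Polar $n$-complex numbers: $u=x_0+h_1x_1+\cdots+h_{n-1}x_{n-1}$, $x_j\in\mathbb{R}$, $h_0=1$, componentwise addition, bilinear multiplication $h_jh_k=h_{(j+k)\bmod n}$. *)

(* Defs.v *)
From HB Require Import structures.
From mathcomp Require Import all_boot all_order all_algebra.
From mathcomp Require Import all_classical all_reals all_analysis.
Set Implicit Arguments. Unset Strict Implicit. Unset Printing Implicit Defensive.
Import Order.TTheory GRing.Theory Num.Theory.
Import numFieldNormedType.Exports.
Local Open Scope ring_scope.

(* Polar n-complex numbers u = x_0 + h_1 x_1 + ... + h_{n-1} x_{n-1},
   represented by the real row vector (x_0, ..., x_{n-1}) : 'rV[R]_n. *)

(* bilinear multiplication with h_j h_k = h_{(j+k) mod n} *)
Definition pcmul (R : realType) (n : nat) (u v : 'rV[R]_n) : 'rV[R]_n :=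
  \row_(m < n) \sum_(j < n) \sum_(k < n | ((j + k) %% n)%N == (m : nat))
      u 0 j * v 0 k.

Definition pcone (R : realType) (n : nat) : 'rV[R]_n :=
  \row_(m < n) ((m : nat) == 0%N)%:R.

Definition pcpow (R : realType) (n : nat) (u : 'rV[R]_n) (l : nat) : 'rV[R]_n :=
  iter l (pcmul u) (pcone R n).

Definition pcterm (R : realType) (n : nat) (a : nat -> 'rV[R]_n) (u0 u : 'rV[R]_n)
  (l : nat) : 'rV[R]_n := pcmul (a l) (pcpow (u - u0) l).

Definition pcseries (R : realType) (n : nat) (a : nat -> 'rV[R]_n) (u0 u : 'rV[R]_n)
  : 'rV[R]_n := limn (series (pcterm a u0 u)).

Definition pccomp (R : realType) (n : nat) (a : nat -> 'rV[R]_n) (u0 : 'rV[R]_n)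
  (k : 'I_n) (x : 'rV[R]_n) : R := pcseries a u0 x 0 k.

Definition pcbasis (R : realType) (n : nat) (j : 'I_n) : 'rV[R]_n := delta_mx 0 j.

(* Main.v *)
Require Import Defs.
From HB Require Import structures.
From mathcomp Require Import all_boot all_order all_algebra all_solvable all_field.
From mathcomp Require Import all_classical all_reals all_analysis.
From mathcomp Require Import complex.
From mathcomp Require Import zify ring lra.
Import Order.TTheory GRing.Theory Num.Theory.
Import numFieldNormedType.Exports.
Set Implicit Arguments. Unset Strict Implicit. Unset Printing Implicit Defensive.
Local Open Scope ring_scope.
Local Open Scope classical_set_scope.

Import Normc.
Section Alg.
Variables (R : realType) (n : nat).
Local Notation A := 'rV[R]_n.
Local Notation C := R[i].
Local Notation toC := (real_complex R).

Definition chi (z : C) (u : A) : C := \sum_(j < n) toC (u 0 j) * z ^+ j.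

Lemma chi0 z : chi z 0 = 0.
Proof. by rewrite /chi big1 // => j _; rewrite mxE rmorph0 mul0r. Qed.

Lemma chiD z u v : chi z (u + v) = chi z u + chi z v.
Proof. by rewrite /chi -big_split; apply eq_bigr => j _; rewrite !mxE rmorphD mulrDl. Qed.

Lemma chiZ z r u : chi z (r *: u) = toC r * chi z u.
Proof. by rewrite /chi mulr_sumr; apply eq_bigr => j _; rewrite !mxE rmorphM mulrA. Qed.

Lemma chiN z u : chi z (- u) = - chi z u.
Proof. by rewrite -scaleN1r chiZ rmorphN rmorph1 mulN1r. Qed.

Lemma chiB z u v : chi z (u - v) = chi z u - chi z v.
Proof. by rewrite chiD chiN. Qed.

Lemma chi_sum z N (F : nat -> A) : chi z (\sum_(l < N) F l) = \sum_(l < N) chi z (F l).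
Proof. exact: (big_morph (chi z) (chiD z) (chi0 z)). Qed.

Lemma chi_one z : (0 < n)%N -> chi z (pcone R n) = 1.
Proof.
move=> n0; rewrite /chi (bigD1 (Ordinal n0)) //= big1 ?addr0.
  by rewrite !mxE /= rmorph1 mul1r expr0.
move=> j /negbTE jn; rewrite !mxE.
suff -> : ((j : nat) == 0%N) = false by rewrite rmorph0 mul0r.
by apply: contraFF jn => /eqP j0; apply/eqP/val_inj.
Qed.

Lemma chi_basis z (j : 'I_n) : chi z (pcbasis R j) = z ^+ j.
Proof.
rewrite /chi (bigD1 j) //= big1 ?addr0.
  by rewrite /pcbasis !mxE !eqxx rmorph1 mul1r.
move=> k /negbTE kj; rewrite /pcbasis !mxE /=; case: eqP => [e|_]; [by move: kj; rewrite e eqxx | by rewrite rmorph0 mul0r].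
Qed.

Lemma chi_mul z u v : (0 < n)%N -> z ^+ n = 1 -> chi z (pcmul u v) = chi z u * chi z v.
Proof.
move=> n0 zn; rewrite /chi big_distrlr /=.
transitivity (\sum_(m < n) \sum_(j < n) \sum_(k < n)
   (if ((j + k) %% n)%N == m then toC (u 0 j * v 0 k) * z ^+ m else 0)).
  apply: eq_bigr => m _; rewrite /pcmul mxE rmorph_sum mulr_suml; apply: eq_bigr => j _.
  by rewrite rmorph_sum mulr_suml big_mkcond; apply: eq_bigr => k _; case: ifP.
rewrite exchange_big; apply: eq_bigr => j _; rewrite exchange_big; apply: eq_bigr => k _.
rewrite (bigD1 (Ordinal (ltn_pmod (j + k) n0))) //= eqxx big1 ?addr0.
  by rewrite expr_mod // exprD rmorphM mulrACA.
by move=> m /negbTE mk; case: eqP => // hm; move: mk; rewrite -val_eqE /= hm eqxx.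
Qed.

Lemma chi_pow z u l : (0 < n)%N -> z ^+ n = 1 -> chi z (pcpow u l) = chi z u ^+ l.
Proof.
move=> n0 zn; elim: l => [|l IH]; first by rewrite expr0 /pcpow /= chi_one.
by rewrite /pcpow iterS -/(pcpow u l) chi_mul // IH exprS.
Qed.


Lemma normc_ge0 (z : C) : 0 <= normc z.
Proof. by case: z => a b; rewrite /normc sqrtr_ge0. Qed.

Lemma normc_sum (I : Type) (r : seq I) (F : I -> C) :
  normc (\sum_(i <- r) F i) <= \sum_(i <- r) normc (F i).
Proof.
elim/big_ind2: _ => [|x1 x2 y1 y2 h1 h2|]; first by rewrite normc0.
  by apply: le_trans (le_normcD _ _) _; apply: lerD.
by [].
Qed.

Lemma normcR (r : R) : normc (toC r) = `|r|.
Proof. by rewrite /normc /= expr0n /= addr0 sqrtr_sqr. Qed.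

Lemma normcX (z : C) k : normc (z ^+ k) = normc z ^+ k.
Proof. by elim: k => [|k IH]; rewrite ?expr0 ?normc1 // !exprS normcM IH. Qed.

Lemma normc_root (z : C) : (0 < n)%N -> z ^+ n = 1 -> normc z = 1.
Proof.
move=> n0 zn; apply/eqP; rewrite -(pexpr_eq1 n0 (normc_ge0 z)) -normcX zn normc1 //.
Qed.

Lemma comp_le_norm (u : A) (j : 'I_n) : `|u 0 j| <= `|u|.
Proof.
rewrite (_ : `|u| = mx_norm u) // mx_normrE.
exact: (le_bigmax 0 (fun ij : 'I_1 * 'I_n => `|u ij.1 ij.2|) (0, j)).
Qed.

Lemma norm_le_comp (u : A) c : 0 <= c -> (forall j, `|u 0 j| <= c) -> `|u| <= c.
Proof.
move=> c0 h; rewrite (_ : `|u| = mx_norm u) // mx_normrE; apply: bigmax_le => // [[i j]] _ /=.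
by rewrite (ord1 i).
Qed.

Lemma chi_bound z u : normc z = 1 -> normc (chi z u) <= n%:R * `|u|.
Proof.
move=> z1; apply: le_trans (normc_sum _ _) _.
have -> : n%:R * `|u| = \sum_(j < n) `|u| by rewrite sumr_const card_ord mulr_natl.
apply: ler_sum => j _.
by rewrite normcM normcX z1 expr1n mulr1 normcR comp_le_norm.
Qed.

Lemma geom_sum (w : C) m : n.-primitive_root w ->
  \sum_(p < n) (w ^+ m) ^+ p = if (n %| m)%N then n%:R else 0.
Proof.
move=> pw; rewrite (prim_order_dvd pw); case: ifP => [/eqP ->|wm].
  by under eq_bigr do rewrite expr1n; rewrite sumr_const card_ord.
have : (w ^+ m) ^+ n - 1 = 0 by rewrite -exprM mulnC exprM (prim_expr_order pw) expr1n subrr.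
rewrite subrX1 => /eqP; rewrite mulf_eq0 subr_eq0 wm /= => /eqP //.
Qed.

Lemma dvd_shift (j k : 'I_n) : (n %| j + (n - k))%N = (j == k).
Proof.
case: (ltngtP j k) => [jk|kj|/val_inj ->]; last by rewrite eqxx subnKC ?dvdnn // ltnW.
- have -> : (j == k) = false by apply/negbTE; rewrite neq_ltn jk.
  apply/negbTE; apply/negP => /dvdn_leq; have ? := ltn_ord k; have ? := ltn_ord j.
  by move=> h; have := h ltac:(lia); lia.
- have -> : (j == k) = false by apply/negbTE; rewrite neq_ltn kj orbT.
  have ? := ltn_ord k; have ? := ltn_ord j.
  have -> : (j + (n - k) = (j - k) + n)%N by lia.
  rewrite (dvdn_addl _ (dvdnn n)); apply/negbTE; apply/negP => /dvdn_leq h; have := h ltac:(lia); lia.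
Qed.

Lemma chi_inv (w : C) (u : A) (k : 'I_n) : n.-primitive_root w ->
  n%:R * toC (u 0 k) = \sum_(p < n) chi (w ^+ p) u * (w ^+ p) ^+ (n - k).
Proof.
move=> pw.
transitivity (\sum_(j < n) toC (u 0 j) * \sum_(p < n) (w ^+ (j + (n - k))) ^+ p).
  rewrite (bigD1 k) //= geom_sum // dvd_shift eqxx big1 ?addr0; first by rewrite mulrC.
  by move=> j jk; rewrite geom_sum // dvd_shift (negbTE jk) mulr0.
rewrite [RHS](eq_bigr (fun p : 'I_n => \sum_(j < n) toC (u 0 j) * (w ^+ (j + (n - k))) ^+ p)).
  by rewrite exchange_big; apply: eq_bigr => j _; rewrite mulr_sumr.
move=> p _; rewrite /chi mulr_suml; apply: eq_bigr => j _.
by rewrite -mulrA -exprD -!exprM mulnC.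
Qed.

Lemma norm_le_chi (w : C) (u : A) : n.-primitive_root w ->
  `|u| <= \sum_(p < n) normc (chi (w ^+ p) u).
Proof.
move=> pw; have n0 := prim_order_gt0 pw.
apply: norm_le_comp; first by apply: sumr_ge0 => p _; apply: normc_ge0.
move=> k; apply: (@le_trans _ _ (n%:R * `|u 0 k|)).
  by rewrite ler_peMl // ler1n.
rewrite -[n%:R]normr_nat -normrM.
have -> : `|n%:R * u 0 k| = normc (n%:R * toC (u 0 k)).
  by rewrite -normcR rmorphM rmorph_nat.
rewrite (chi_inv u k pw); apply: le_trans (normc_sum _ _) _; apply: ler_sum => p _.
rewrite normcM normcX (normc_root (z := w ^+ p) n0) ?expr1n ?mulr1 //.
by rewrite -exprM mulnC exprM (prim_expr_order pw) expr1n.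
Qed.

Lemma bern (x r : R) l : 0 <= x -> 0 <= r -> l%:R * x ^+ l.-1 * r <= (x + r) ^+ l.
Proof.
move=> x0 r0; case: l => [|l]; first by rewrite mul0r mul0r expr0.
rewrite exprDn !big_ord_recl /=.
apply: (@le_trans _ _ (x ^+ (l.+1 - 1) * r ^+ 1 *+ 'C(l.+1, 1))).
  by rewrite bin1 subn1 /= expr1 -mulrA mulr_natl.
rewrite addrCA lerDl addr_ge0 //.
  by rewrite mulrn_wge0 // mulr_ge0 // exprn_ge0.
by apply: sumr_ge0 => i _; rewrite mulrn_wge0 // mulr_ge0 // exprn_ge0.
Qed.

Lemma binom_est (c e : C) (t r : R) l : normc e <= 1 -> 0 < r -> `|t| <= r ->
  normc ((c + toC t * e) ^+ l - c ^+ l - toC t * (l%:R * c ^+ l.-1 * e))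
  <= (t / r) ^+ 2 * (normc c + r) ^+ l.
Proof.
move=> e1 r0 tr; have x0 := normc_ge0 c.
case: l => [|l].
  rewrite !expr0 mul0r mul0r mulr0 subrr subr0 normc0.
  by rewrite mulr_ge0 ?sqr_ge0 ?expr_ge0 // addr_ge0 // ltW.
set h := toC t * e.
rewrite exprDn !big_ord_recl /=.
set S := \sum_(i < l) _.
have -> : c ^+ (l.+1 - 0) * h ^+ 0 *+ 'C(l.+1, 0) +
   (c ^+ (l.+1 - 1) * h ^+ 1 *+ 'C(l.+1, 1) + S) - c ^+ l.+1 -
   toC t * (l.+1%:R * c ^+ l.+1.-1 * e) = S.
  rewrite bin0 bin1 subn0 subn1 /= expr0 expr1 mulr1 /h.
  rewrite -mulr_natr; ring.
apply: (le_trans (normc_sum _ _)).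
rewrite exprDn !big_ord_recl /= !mulrDr mulr_sumr.
rewrite -[X in X <= _]add0r; apply: lerD.
  by rewrite mulr_ge0 ?sqr_ge0 ?mulrn_wge0 ?mulr_ge0 ?exprn_ge0 // ltW.
rewrite -[X in X <= _]add0r; apply: lerD.
  by rewrite mulr_ge0 ?sqr_ge0 ?mulrn_wge0 ?mulr_ge0 ?exprn_ge0 // ltW.
apply: ler_sum => i _.
rewrite normcMn normcM !normcX /h normcM normcR.
rewrite mulrnAr; apply: ler_wMn2r.
rewrite [X in _ <= X]mulrCA; apply: ler_wpM2l; first by rewrite exprn_ge0.
rewrite (_ : bump 0 (bump 0 i) = i.+2) //.
have s0 : 0 <= `|t| by [].
apply: (@le_trans _ _ (`|t| ^+ i.+2)).
  rewrite exprMn -[X in _ <= X]mulr1; apply: ler_wpM2l; [exact: exprn_ge0 | exact: exprn_ile1 (normc_ge0 e) e1].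
rewrite (_ : `|t| ^+ i.+2 = t ^+ 2 * `|t| ^+ i); last first.
  by rewrite -real_normK ?num_real // -exprD add2n.
rewrite (_ : (t / r) ^+ 2 * r ^+ i.+2 = t ^+ 2 * r ^+ i); last first.
  by rewrite -(addn2 i) exprD expr_div_n [r ^+ i * _]mulrC mulrA divfK // expf_neq0 // gt_eqF.
by apply: ler_wpM2l; [rewrite sqr_ge0 | rewrite lerXn2r // nnegrE ltW].
Qed.
End Alg.

Lemma prim_exists (R : realType) (n : nat) : (n > 0)%N -> {z : R[i] | n.-primitive_root z}.
Proof.
pose p : {poly R[i]} := 'X^n - 1; have [r Dp] := closed_field_poly_normal p.
move=> n_gt0; apply/sigW; rewrite (monicP _) ?monicXnsubC // scale1r in Dp.
have rn1: all n.-unity_root r by apply/allP=> z; rewrite -root_prod_XsubC -Dp.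
have sz_r: (n < (size r).+1)%N.
  by rewrite -(size_prod_XsubC r id) -Dp size_XnsubC.
have [|z] := hasP (has_prim_root n_gt0 rn1 _ sz_r); last by exists z.
by rewrite -separable_prod_XsubC -Dp separable_Xn_sub_1 // pnatr_eq0 -lt0n.
Qed.

Lemma abs_cvg (R : realType) n (u_ : nat -> 'rV[R]_n) :
  cvgn (series (fun l => `|u_ l|)) -> cvgn (series u_).
Proof.
move=> /cauchy_cvgP/cauchy_seriesP u_ncvg.
apply/cauchy_cvgP/cauchy_seriesP => e /u_ncvg.
apply: filterS => n0 /=; rewrite ger0_norm ?sumr_ge0//.
by apply: le_lt_trans; apply: ler_norm_sum.
Qed.

Lemma cvg_entry (R : realType) n (u : nat -> 'rV[R]_n) (l : 'rV[R]_n) i :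
  u @ \oo --> l -> (fun N => u N 0 i) @ \oo --> l 0 i.
Proof.
move=> /cvgrPdist_le h; apply/cvgrPdist_le => e e0; apply: filterS (h e e0) => N.
apply: le_trans; rewrite (_ : l 0 i - u N 0 i = (l - u N) 0 i); last by rewrite !mxE.
exact: comp_le_norm.
Qed.

Lemma shift_entry (R : realType) n (y : 'rV[R]_n) (k j i : 'I_n) :
  (i : nat) = ((k + j) %% n)%N -> pcmul y (pcbasis R j) 0 i = y 0 k.
Proof.
move=> hi; rewrite /pcmul mxE.
rewrite (eq_bigr (fun j' : 'I_n => if ((j' + j) %% n)%N == i then y 0 j' else 0)).
  rewrite -big_mkcond /= (big_pred1 k) // => j' /=.
  rewrite hi eqn_modDr !modn_small //; exact: val_eqE.
move=> j' _; rewrite big_mkcond /= (bigD1 j) //= big1 ?addr0.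
  by rewrite /pcbasis mxE !eqxx /= mulr1; case: ifP.
move=> k' /negbTE kj; rewrite /pcbasis mxE /=; case: ifP => // _.
by case: eqP => [e|_]; [move: kj; rewrite e eqxx | rewrite mulr0].
Qed.

Lemma chi_series (R : realType) n z (f : nat -> 'rV[R]_n) N :
  chi z (series f N) = \sum_(0 <= l < N) chi z (f l).
Proof. exact: (big_morph (chi z) (chiD z) (chi0 _ z)). Qed.

Section Main.
Variables (R : realType) (n : nat) (a : nat -> 'rV[R]_n) (u0 x : 'rV[R]_n) (w : R[i]).
Hypothesis pw : n.-primitive_root w.
Local Notation toC := (real_complex R).
Local Notation cc p := (chi (w ^+ p) (x - u0)).
Local Notation ca p l := (chi (w ^+ p) (a l)).

Let n0 : (0 < n)%N. Proof. exact: prim_order_gt0 pw. Qed.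

Lemma wpn (p : nat) : (w ^+ p) ^+ n = 1.
Proof. by rewrite -exprM mulnC exprM (prim_expr_order pw) expr1n. Qed.

Lemma chi_term p y l : chi (w ^+ p) (pcterm a u0 y l) = ca p l * chi (w ^+ p) (y - u0) ^+ l.
Proof. by rewrite /pcterm chi_mul ?wpn // chi_pow ?wpn. Qed.

Lemma point_bound p y r : cvgn (series (fun l => `|pcterm a u0 y l|)) -> 0 < r ->
  normc (cc p) + r <= normc (chi (w ^+ p) (y - u0)) ->
  exists M, 0 <= M /\ forall N,
    \sum_(0 <= l < N) normc (ca p l) * (normc (cc p) + r) ^+ l <= M.
Proof.
move=> hc r0 hle.
have nd : nondecreasing_seq (series (fun l => `|pcterm a u0 y l|)).
  by apply: nondecreasing_series => l _ _.
exists (n%:R * limn (series (fun l => `|pcterm a u0 y l|))); split.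
  apply: mulr_ge0 => //; apply: le_trans (nondecreasing_cvgn_le nd hc 0).
  by rewrite /series /= big_geq.
move=> N; apply: (@le_trans _ _ (n%:R * series (fun l => `|pcterm a u0 y l|) N)); last first.
  by rewrite ler_wpM2l // nondecreasing_cvgn_le.
rewrite /series mulr_sumr; apply: ler_sum => l _.
apply: le_trans (chi_bound _ (normc_root n0 (wpn p)))  .
rewrite chi_term normcM normcX; apply: ler_wpM2l; first exact: normc_ge0.
by apply: lerXn2r => //; rewrite nnegrE ?addr_ge0 ?normc_ge0 // ltW.
Qed.


Lemma pcone_norm : `|pcone R n| <= 1.
Proof.
apply: norm_le_comp => // j; rewrite /pcone mxE; case: eqP => _; by rewrite ?normr1 ?normr0.
Qed.

Lemma mono_sum p r r' N : 0 <= r -> r <= r' ->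
  \sum_(0 <= l < N) normc (ca p l) * (normc (cc p) + r) ^+ l <=
  \sum_(0 <= l < N) normc (ca p l) * (normc (cc p) + r') ^+ l.
Proof.
move=> r0 rr; apply: ler_sum => l _; apply: ler_wpM2l; first exact: normc_ge0.
by apply: lerXn2r; rewrite ?nnegrE ?addr_ge0 ?normc_ge0 ?lerD // (le_trans r0).
Qed.

Lemma per_p (δ : R) (p : nat) : 0 < δ ->
  (forall y, `|y - x| < δ -> cvgn (series (fun l => `|pcterm a u0 y l|))) ->
  exists r, 0 < r /\ exists M, 0 <= M /\ forall N,
    \sum_(0 <= l < N) normc (ca p l) * (normc (cc p) + r) ^+ l <= M.
Proof.
move=> d0 hconv.
set e := δ / (2 * (`|x - u0| + 1)).
have h1 : 0 < `|x - u0| + 1 by rewrite ltr_wpDl.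
have e0 : 0 < e by rewrite divr_gt0 // mulr_gt0.
have he : e * (`|x - u0| + 1) < δ.
  by rewrite /e invfM mulrA mulfVK ?gt_eqF // ltr_pdivrMr // ltr_pMr // ltr1n.
have he1 : e < δ.
  by apply: le_lt_trans he; have := normr_ge0 (x - u0); nra.
case: (eqVneq (cc p) 0) => [c0|cn0].
- exists e; split => //.
  apply: (point_bound (y := x + e *: pcone R n)) => //.
    apply: hconv; rewrite addrAC subrr add0r normrZ gtr0_norm //.
    by apply: le_lt_trans he1; have := pcone_norm; have := normr_ge0 (pcone R n); nra.
  rewrite c0 normc0 add0r addrAC chiD chiZ chi_one // c0 add0r mulr1 normcR gtr0_norm //.
- have cpos : 0 < normc (cc p).
    rewrite lt_def normc_ge0 andbT; apply/eqP => /eq0_normc h; by rewrite h eqxx in cn0.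
  exists (e * normc (cc p)); split; first exact: mulr_gt0.
  apply: (point_bound (y := x + e *: (x - u0))).
    apply: hconv; rewrite addrAC subrr add0r normrZ gtr0_norm //.
    by apply: le_lt_trans he; have := normr_ge0 (x - u0); nra.
    exact: mulr_gt0.
  have -> : x + e *: (x - u0) - u0 = (1 + e) *: (x - u0).
    by rewrite scalerDl scale1r addrAC.
  rewrite chiZ normcM normcR gtr0_norm ?addr_gt0 // mulrDl mul1r lexx //.
Qed.

Lemma radius (δ : R) : 0 < δ ->
  (forall y, `|y - x| < δ -> cvgn (series (fun l => `|pcterm a u0 y l|))) ->
  exists r, 0 < r /\ exists M, 0 <= M /\ forall (p : 'I_n) N,
    \sum_(0 <= l < N) normc (ca p l) * (normc (cc p) + r) ^+ l <= M.
Proof.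
move=> d0 hconv.
suff : forall s : seq 'I_n, exists r, 0 < r /\ exists M, 0 <= M /\ forall (p : 'I_n), p \in s ->
  forall N, \sum_(0 <= l < N) normc (ca p l) * (normc (cc p) + r) ^+ l <= M.
  move=> /(_ (enum 'I_n)) [r [r0 [M [M0 h]]]]; exists r; split => //; exists M; split => //.
  by move=> p; apply: h; rewrite mem_enum.
elim => [|p s [r1 [r10 [M1 [M10 h1]]]]]; first by exists 1; split => //; exists 0.
have [r2 [r20 [M2 [M20 h2]]]] := per_p p d0 hconv.
exists (Num.min r1 r2); split; first by rewrite lt_min r10.
exists (Num.max M1 M2); split; first by rewrite le_max M10.
have m0 : 0 <= Num.min r1 r2 by rewrite le_min !ltW.
have m1 : Num.min r1 r2 <= r1 by rewrite ge_min lexx.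
have m2 : Num.min r1 r2 <= r2 by rewrite ge_min lexx orbT.
move=> q; rewrite inE => /orP [/eqP -> | qs] N.
  apply: le_trans (@mono_sum p _ r2 N m0 m2) _.
  by apply: le_trans (h2 N) _; rewrite le_max lexx orbT.
apply: le_trans (@mono_sum q _ r1 N m0 m1) _.
by apply: le_trans (h1 q qs N) _; rewrite le_max lexx.
Qed.


Definition Dl l := l%:R *: pcmul (a l) (pcpow (x - u0) l.-1).

Lemma chi_D p l : chi (w ^+ p) (Dl l) = l%:R * (ca p l * cc p ^+ l.-1).
Proof. by rewrite /Dl chiZ chi_mul ?wpn // chi_pow ?wpn // rmorph_nat. Qed.

Lemma normc_nat l : normc (l%:R : R[i]) = l%:R.
Proof. by have := normcR (l%:R : R); rewrite rmorph_nat normr_nat. Qed.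

Lemma D_bound p l r : 0 < r ->
  normc (chi (w ^+ p) (Dl l)) <= normc (ca p l) * (normc (cc p) + r) ^+ l / r.
Proof.
move=> r0; rewrite ler_pdivlMr // chi_D !normcM normcX normc_nat.
rewrite mulrCA -mulrA; apply: ler_wpM2l; first exact: normc_ge0.
by rewrite bern ?normc_ge0 ?ltW.
Qed.

Lemma Dconv r M : 0 < r -> (forall (p : 'I_n) N,
    \sum_(0 <= l < N) normc (ca p l) * (normc (cc p) + r) ^+ l <= M) ->
  cvgn (series Dl).
Proof.
move=> r0 h; apply: abs_cvg; apply: nondecreasing_is_cvgn.
  by apply: nondecreasing_series => l _ _.
exists (n%:R * (M / r)) => _ [N _ <-].
apply: (@le_trans _ _ (\sum_(0 <= l < N) \sum_(p < n)
    normc (ca p l) * (normc (cc p) + r) ^+ l / r)).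
  rewrite /series /=; apply: ler_sum => l _; apply: le_trans (norm_le_chi _ pw) _.
  by apply: ler_sum => p _; apply: D_bound.
rewrite exchange_big /= (_ : n%:R * (M / r) = \sum_(p < n) (M / r)); last by rewrite sumr_const card_ord mulr_natl.
apply: ler_sum => p _; rewrite -mulr_suml; apply: ler_wpM2r; first by rewrite invr_ge0 ltW.
exact: h.
Qed.

Lemma estimate r M : 0 < r -> 0 <= M -> (forall (p : 'I_n) N,
    \sum_(0 <= l < N) normc (ca p l) * (normc (cc p) + r) ^+ l <= M) ->
  forall (t : R) (j k i : 'I_n), t != 0 -> `|t| <= r -> (i : nat) = ((k + j) %% n)%N ->
  forall N,
  `| (t^-1 *: (series (pcterm a u0 (t *: pcbasis R j + x)) N - series (pcterm a u0 x) N)) 0 i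
     - series Dl N 0 k| <= `|t| * (n%:R * M / r ^+ 2).
Proof.
move=> r0 M0 h t j k i tn0 tr hi N.
rewrite -(shift_entry (series Dl N) hi).
set V := (t^-1 *: _).
rewrite (_ : V 0 i - _ = (V - pcmul (series Dl N) (pcbasis R j)) 0 i); last by rewrite !mxE.
apply: le_trans (comp_le_norm _ i) _; apply: le_trans (norm_le_chi _ pw) _.
rewrite (_ : `|t| * (n%:R * M / r ^+ 2) = \sum_(p < n) (`|t| / r ^+ 2 * M)); last first.
  by rewrite sumr_const card_ord -mulr_natr; ring.
apply: ler_sum => p _.
rewrite /V chiB chiZ chiB !chi_series chi_mul ?wpn // chi_series chi_basis.
rewrite -sumrB mulr_sumr mulr_suml -sumrB.
apply: le_trans (normc_sum _ _) _.
apply: (@le_trans _ _ (\sum_(0 <= l < N) `|t| / r ^+ 2 * (normc (ca p l) * (normc (cc p) + r) ^+ l))); last first.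
  by rewrite -mulr_sumr; apply: ler_wpM2l; [rewrite divr_ge0 ?sqr_ge0 | exact: h].
apply: ler_sum => l _.
rewrite !chi_term chi_D.
have -> : t *: pcbasis R j + x - u0 = (x - u0) + t *: pcbasis R j by rewrite [RHS]addrAC [t *: _ + x]addrC.

rewrite chiD chiZ chi_basis.
set c := cc p; set e := (w ^+ p) ^+ j; set b := ca p l.
have tC : toC t != 0.
  by apply: contra tn0 => /eqP; rewrite -(rmorph0 (real_complex R)) => /complexI ->.
have -> : toC t^-1 * (b * (c + toC t * e) ^+ l - b * c ^+ l) - l%:R * (b * c ^+ l.-1) * e
    = b * toC t^-1 * ((c + toC t * e) ^+ l - c ^+ l - toC t * (l%:R * c ^+ l.-1 * e)).
  by rewrite fmorphV; field.
have e1 : normc e <= 1.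
  by rewrite /e normcX (normc_root n0 (wpn p)) expr1n.
have := binom_est c l e1 r0 tr => hest.
rewrite normcM normcM normcR normrV ?unitfE //.
apply: le_trans (ler_wpM2l _ hest) _.
  by rewrite mulr_ge0 ?normc_ge0 // invr_ge0.
have ta : `|t| != 0 by rewrite normr_eq0.
rewrite expr_div_n -real_normK ?num_real //.
have rn : r != 0 by rewrite gt_eqF.
rewrite le_eqVlt; apply/orP; left; apply/eqP; field.
by rewrite ta rn.
Qed.

End Main.

Lemma basis_norm (R : realType) n (j : 'I_n) : `|pcbasis R j| <= 1.
Proof.
apply: norm_le_comp => // j'; rewrite /pcbasis mxE; case: (_ && _); by rewrite ?normr1 ?normr0.
Qed.

Theorem mainTheorem15 (R : realType) (n : nat) (hn : (2 <= n)%N)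
  (a : nat -> 'rV[R]_n) (u0 : 'rV[R]_n) (U : set 'rV[R]_n)
  (hU : open U)
  (habs : forall u, U u -> cvgn (series (fun l => `| pcterm a u0 u l |))) :
  forall x, U x ->
  forall (k j1 j2 i1 i2 : 'I_n),
    (i1 : nat) = ((k + j1) %% n)%N -> (i2 : nat) = ((k + j2) %% n)%N ->
    derivable (pccomp a u0 i1) x (pcbasis R j1) /\
    'D_(pcbasis R j1) (pccomp a u0 i1) x = 'D_(pcbasis R j2) (pccomp a u0 i2) x.
Proof.
move=> x Ux k j1 j2 i1 i2 hi1 hi2.
have n0 : (0 < n)%N by apply: leq_trans hn.
have [w pw] := prim_exists R n0.
have [δ d0 hδ] : exists2 δ : R, 0 < δ & forall y, `|y - x| < δ -> U y.
  move: hU; rewrite openE => /(_ x Ux) /nbhs_ballP [e /= e0 he].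
  exists e => // y hy; apply: he; rewrite mx_norm_ball /ball_ /= distrC //.
have hconv : forall y, `|y - x| < δ -> cvgn (series (fun l => `|pcterm a u0 y l|)).
  by move=> y hy; apply: habs; apply: hδ.
have [r [r0 [M [M0 hM]]]] := radius pw d0 hconv.
have cD := Dconv pw r0 hM.
set Lv := limn (series (Dl a u0 x)).
have key : forall (j i : 'I_n), (i : nat) = ((k + j) %% n)%N ->
   (fun h : R => h^-1 *: ((pccomp a u0 i \o shift x) (h *: pcbasis R j) - pccomp a u0 i x))
     @ 0^' --> Lv 0 k.
  move=> j i hi.
  set K := n%:R * M / r ^+ 2.
  have K0 : 0 <= K by rewrite divr_ge0 ?sqr_ge0 // mulr_ge0.
  apply/cvgrPdist_le => eps eps0.
  have ek : 0 < eps / (K + 1) by rewrite divr_gt0 // ltr_wpDl.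
  near=> h.
  have hn0 : h != 0 by near: h; exact: nbhs_dnbhs_neq.
  have hd : `|h| < Num.min δ (Num.min r (eps / (K + 1))).
    by near: h; apply: dnbhs0_lt; rewrite !lt_min d0 r0 ek.
  move: hd; rewrite !lt_min => /and3P [hd hr he].
  set y := h *: pcbasis R j + x.
  have Uy : `|y - x| < δ.
    rewrite /y addrK normrZ; apply: le_lt_trans hd.
    by have := basis_norm R j; have := normr_ge0 (pcbasis R j); have := normr_ge0 h; nra.
  have cy := abs_cvg (hconv y Uy).
  have cx := abs_cvg (hconv x ltac:(by rewrite subrr normr0)).
  have hu : (fun N => (h^-1 *: (series (pcterm a u0 y) N - series (pcterm a u0 x) N)) 0 i) @ \oo
      --> (h^-1 *: (limn (series (pcterm a u0 y)) - limn (series (pcterm a u0 x)))) 0 i.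
    apply: cvg_entry; apply: cvgZ; first exact: cvg_cst.
    exact: cvgB.
  have hv := cvg_entry (i := k) cD.
  have hb : `|Lv 0 k - (h^-1 *: (limn (series (pcterm a u0 y)) - limn (series (pcterm a u0 x)))) 0 i|
      <= `|h| * K.
    apply: (ler_cvg_to (cvg_norm (cvgB hv hu)) (cvg_cst _)).
    near=> N; rewrite distrC.
    exact: (estimate pw r0 M0 hM hn0 (ltW hr) hi N).
  rewrite /= /pccomp /pcseries.
  move: hb; rewrite !mxE => hb; apply: le_trans hb _.
  apply: (@le_trans _ _ (`|h| * (K + 1))); first by rewrite ler_wpM2l // lerDl.
  by rewrite -ler_pdivlMr ?ltr_wpDl // ltW.
have K1 := key j1 i1 hi1; have K2 := key j2 i2 hi2.
split; first exact: cvgP K1.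
by rewrite /derive (cvg_lim (@Rhausdorff R) K1) (cvg_lim (@Rhausdorff R) K2).
Unshelve. all: by end_near.
Qed.
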